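(* Let $A\in\mathbb Z^{d\times n}$ with $\ker(A)\cap\mathbb N^n=\{0\}$ and let $B\subseteq\ker(A)$ be any subset. Then $B$ is distance reducing if and only if $B$ reduces the distance of the Graver basis $G(A)$. Similarly, $B$ is strongly distance reducing if and only if $B$ strongly reduces the distance of $G(A)$.
   Context: For $z\in\mathbb Z^n$, $z^\pm\in\mathbb N^n$ are the unique vectors with disjoint supports and $z=z^+-z^-$; $\|\cdot\|$ is the $1$-norm. The Graver basis $G(A)$ is the set of nonzero $z\in\ker(A)$ admitting no decomposition $z=u+v$ with $u,v\in\ker(A)\setminus\{0\}$, $z^+=u^++v^+$, $z^-=u^-+v^-$. For nonzero $z\in\ker(A)$ and $u\in\ker(A)$: $u$ reduces $z$ from $z^+$ if there is $\varepsilon\in\{\pm1\}$ with $z^++\varepsilon u\in\mathbb N^n$ and $\|z^++\varepsilon u-z^-\|<\|z\|$; $u$ reduces $z$ from $z^-$ if there is $\varepsilon$ with $z^-+\varepsilon u\in\mathbb N^n$ and $\|z^+-(z^-+\varepsilon u)\|<\|z\|$. $B$ reduces the distance of $Z$ if every nonzero $z\in Z$ is reduced (from $z^+$ or from $z^-$) by some $u\in B$; $B$ strongly reduces the distance of $Z$ if every nonzero $z\in Z$ is reduced from $z^+$ by some $u\in B$ and from $z^-$ by some (possibly different) $u'\in B$. $B$ is (strongly) distance reducing if it (strongly) reduces the distance of $\ker(A)$. *)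

(* Defs.v *)
From mathcomp Require Import all_boot all_order all_algebra.
Set Implicit Arguments. Unset Strict Implicit. Unset Printing Implicit Defensive.
Import Order.TTheory GRing.Theory Num.Theory.
Local Open Scope ring_scope.

Definition zpos n (z : 'cV[int]_n) : 'cV[int]_n := map_mx (fun x => Num.max x 0) z.
Definition zneg n (z : 'cV[int]_n) : 'cV[int]_n := map_mx (fun x => Num.max (- x) 0) z.

Definition norm1 n (z : 'cV[int]_n) : int := \sum_(i < n) `|z i 0|.

Definition is_nat_vec n (v : 'cV[int]_n) : Prop := forall i, 0 <= v i 0.

Definition inker d n (A : 'M[int]_(d, n)) (z : 'cV[int]_n) : Prop := A *m z = 0.

Definition graver d n (A : 'M[int]_(d, n)) (z : 'cV[int]_n) : Prop :=
  inker A z /\ z <> 0 /\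
      ~ (exists u v : 'cV[int]_n,
           inker A u /\ u <> 0 /\ inker A v /\ v <> 0 /\
           z = u + v /\ zpos z = zpos u + zpos v /\ zneg z = zneg u + zneg v).

Definition reduces_from_pos n (z u : 'cV[int]_n) : Prop :=
  exists eps : int, (eps = 1 \/ eps = -1) /\
    is_nat_vec (zpos z + eps *: u) /\
    norm1 (zpos z + eps *: u - zneg z) < norm1 z.

Definition reduces_from_neg n (z u : 'cV[int]_n) : Prop :=
  exists eps : int, (eps = 1 \/ eps = -1) /\
    is_nat_vec (zneg z + eps *: u) /\
    norm1 (zpos z - (zneg z + eps *: u)) < norm1 z.

Definition reduces_distance_of n (B Z : 'cV[int]_n -> Prop) : Prop :=
  forall z, Z z -> z <> 0 ->
    exists2 u, B u & (reduces_from_pos z u \/ reduces_from_neg z u).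

Definition strongly_reduces_distance_of n (B Z : 'cV[int]_n -> Prop) : Prop :=
  forall z, Z z -> z <> 0 ->
    (exists2 u, B u & reduces_from_pos z u) /\
    (exists2 u', B u' & reduces_from_neg z u').

Definition distance_reducing d n (A : 'M[int]_(d, n)) (B : 'cV[int]_n -> Prop) : Prop :=
  reduces_distance_of B (inker A).

Definition strongly_distance_reducing d n (A : 'M[int]_(d, n)) (B : 'cV[int]_n -> Prop) : Prop :=
  strongly_reduces_distance_of B (inker A).

(* Main.v *)
Require Import Defs.
From mathcomp Require Import all_boot all_order all_algebra.
From mathcomp Require Import zify.
From Stdlib Require Import Classical.
Set Implicit Arguments. Unset Strict Implicit.
Import Order.TTheory GRing.Theory Num.Theory.
Local Open Scope ring_scope.

Definition conf n (g z : 'cV[int]_n) : Prop :=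
  forall i, (0 <= g i 0 /\ g i 0 <= z i 0) \/ (z i 0 <= g i 0 /\ g i 0 <= 0).

Lemma zposE n (z : 'cV[int]_n) i : zpos z i 0 = Num.max (z i 0) 0.
Proof. by rewrite mxE. Qed.
Lemma znegE n (z : 'cV[int]_n) i : zneg z i 0 = Num.max (- z i 0) 0.
Proof. by rewrite mxE. Qed.

Lemma addE n (a b : 'cV[int]_n) i : (a + b) i 0 = a i 0 + b i 0.
Proof. by rewrite mxE. Qed.
Lemma oppE n (a : 'cV[int]_n) i : (- a) i 0 = - a i 0.
Proof. by rewrite mxE. Qed.
Lemma sclE n (e : int) (a : 'cV[int]_n) i : (e *: a) i 0 = e * a i 0.
Proof. by rewrite mxE. Qed.

Lemma conf_trans n (a b c : 'cV[int]_n) : conf a b -> conf b c -> conf a c.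
Proof. move=> H1 H2 i; move: (H1 i) (H2 i); lia. Qed.

Lemma conf_refl n (a : 'cV[int]_n) : conf a a.
Proof. move=> i; lia. Qed.

Lemma norm1_ge0 n (z : 'cV[int]_n) : 0 <= norm1 z.
Proof. by apply: sumr_ge0 => i _. Qed.

Lemma norm1_gt0 n (z : 'cV[int]_n) : z <> 0 -> 0 < norm1 z.
Proof.
move=> nz.
have [i Hi] : exists i, z i 0 != 0.
  apply: NNPP => H; apply: nz; apply/matrixP => i j.
  rewrite (ord1 j) mxE; apply/eqP; apply: negbNE; apply/negP => Hn; apply: H; by exists i.
rewrite /norm1 (bigD1 i) //=.
set S := bigop _ _ _.
have H0 : 0 <= S by apply: sumr_ge0 => j _.
move: Hi H0; rewrite -normr_gt0; lia.
Qed.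

Lemma exists_graver d n (A : 'M[int]_(d, n)) : forall k (z : 'cV[int]_n),
  (`|norm1 z| <= k)%N -> inker A z -> z <> 0 -> exists g, graver A g /\ conf g z.
Proof.
elim=> [|k IH] z Hk Hz nz.
  have := norm1_gt0 nz; move: Hk; lia.
case: (classic (graver A z)) => Hg; first by exists z; split => //; apply: conf_refl.
have [u [v [Hu [nu [Hv [nv [Ez [Ep En]]]]]]]] : exists u v : 'cV[int]_n,
           inker A u /\ u <> 0 /\ inker A v /\ v <> 0 /\
           z = u + v /\ zpos z = zpos u + zpos v /\ zneg z = zneg u + zneg v.
  apply: NNPP => H; apply: Hg; split => //.
have Cu : conf u z.
  move=> i; move/matrixP: Ep => /(_ i 0); move/matrixP: En => /(_ i 0).
  rewrite !(addE, oppE, sclE) ?zposE ?znegE; lia.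
have Nz : norm1 z = norm1 u + norm1 v.
  have P : forall i, `|z i 0| = `|u i 0| + `|v i 0|.
    move=> i; move/matrixP: Ep => /(_ i 0); move/matrixP: En => /(_ i 0).
    rewrite !(addE, oppE, sclE) ?zposE ?znegE; lia.
  rewrite /norm1 -big_split; apply: eq_bigr => i _; exact: P.
have [g [Gg Cg]] : exists g, graver A g /\ conf g u.
  apply: (IH u) => //.
  have := norm1_gt0 nv; have := norm1_ge0 u; move: Hk; rewrite Nz; lia.
by exists g; split => //; apply: conf_trans Cg Cu.
Qed.

Lemma key_pos n (g z u : 'cV[int]_n) :
  conf g z -> reduces_from_pos g u -> reduces_from_pos z u.
Proof.
move=> C [e [He [Hn Hl]]]; exists e; split => //; split.
  move=> i; move: (Hn i) (C i); rewrite !(addE, oppE, sclE) ?zposE ?znegE; lia.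
have E : norm1 z = \sum_i `|z i 0 - g i 0| + norm1 g.
  have P : forall i, `|z i 0| = `|z i 0 - g i 0| + `|g i 0|.
    move=> i; move: (C i); lia.
  rewrite /norm1 -big_split; apply: eq_bigr => i _; exact: P.
have F : norm1 (zpos z + e *: u - zneg z) <=
   \sum_i `|z i 0 - g i 0| + norm1 (zpos g + e *: u - zneg g).
  have P : forall i, `|(zpos z + e *: u - zneg z) i 0| <= `|z i 0 - g i 0| + `|(zpos g + e *: u - zneg g) i 0|.
    move=> i; rewrite !(addE, oppE, sclE) ?zposE ?znegE; lia.
  rewrite /norm1 -big_split; apply: ler_sum => i _; exact: P.
by apply: (le_lt_trans F); rewrite E ltrD2l.
Qed.

Lemma key_neg n (g z u : 'cV[int]_n) :
  conf g z -> reduces_from_neg g u -> reduces_from_neg z u.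
Proof.
move=> C [e [He [Hn Hl]]]; exists e; split => //; split.
  move=> i; move: (Hn i) (C i); rewrite !(addE, oppE, sclE) ?zposE ?znegE; lia.
have E : norm1 z = \sum_i `|z i 0 - g i 0| + norm1 g.
  have P : forall i, `|z i 0| = `|z i 0 - g i 0| + `|g i 0|.
    move=> i; move: (C i); lia.
  rewrite /norm1 -big_split; apply: eq_bigr => i _; exact: P.
have F : norm1 (zpos z - (zneg z + e *: u)) <=
   \sum_i `|z i 0 - g i 0| + norm1 (zpos g - (zneg g + e *: u)).
  have P : forall i, `|(zpos z - (zneg z + e *: u)) i 0| <= `|z i 0 - g i 0| + `|(zpos g - (zneg g + e *: u)) i 0|.
    move=> i; rewrite !(addE, oppE, sclE) ?zposE ?znegE; lia.
  rewrite /norm1 -big_split; apply: ler_sum => i _; exact: P.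
by apply: (le_lt_trans F); rewrite E ltrD2l.
Qed.

Theorem theorem7p4 (d n : nat) (A : 'M[int]_(d, n)) (B : 'cV[int]_n -> Prop) :
  (forall z : 'cV[int]_n, inker A z -> is_nat_vec z -> z = 0) ->
  (forall u, B u -> inker A u) ->
  (distance_reducing A B <-> reduces_distance_of B (graver A)) /\
  (strongly_distance_reducing A B <-> strongly_reduces_distance_of B (graver A)).
Proof.
move=> _ _; split; split.
- by move=> H z [Hz _] nz; apply: H.
- move=> H z Hz nz.
  have [g [Gg Cg]] := exists_graver (leqnn _) Hz nz.
  have [u Bu [R|R]] := H g Gg (proj1 (proj2 Gg)); exists u => //.
    by left; apply: key_pos Cg R.
  by right; apply: key_neg Cg R.
- by move=> H z [Hz _] nz; apply: H.
- move=> H z Hz nz.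
  have [g [Gg Cg]] := exists_graver (leqnn _) Hz nz.
  have [[u Bu R] [u' Bu' R']] := H g Gg (proj1 (proj2 Gg)).
  split; [exists u => //; apply: key_pos Cg R | exists u' => //; apply: key_neg Cg R'].
Qed.
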